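(* Let $\mathbf{\Pi}=\langle\mathit{PF},\Pi\rangle$ be a multi-valued probabilistic program such that $\mathrm{SM}''[\mathbf{\Pi}]$ is not empty and $M_{\mathbf{\Pi}}(c=v)>0$ for every probabilistic constant $c$ and every $v\in\mathrm{Dom}(c)$. Then for every interpretation $I$, $I$ is a (probabilistic) stable model of $T(\mathbf{\Pi})$ if and only if $I\in\mathrm{SM}''[\mathbf{\Pi}]$.
   Context: Stable model semantics: a rule is $A\leftarrow B\wedge N$ ($A$ a possibly empty disjunction of atoms, $B$ a conjunction of atoms, $N$ a formula with every atom occurrence under negation); the reduct $\Pi^I$ of a ground program keeps $A\leftarrow B$ for rules with $I\models N$; $I$ (a set of atoms) is a stable model if it is a minimal model of $\Pi^I$. An $\mathrm{LP}^{\mathrm{MLN}}$ program $\Pi$ is a finite set of weighted rules $w:R$, $w$ real or the symbol $\alpha$; $\Pi_I=\{w:R\in\Pi\mid I\models R\}$; $\mathrm{SM}[\Pi]=\{I\mid I$ stable model of the unweighted $\Pi_I\}$; with $\alpha$ a real parameter, $W_\Pi(I)=\exp(\sum_{w:R\in\Pi_I}w)$ if $I\in\mathrm{SM}[\Pi]$, else $0$; $P_\Pi(I)=\lim_{\alpha\to\infty}W_\Pi(I)/\sum_{J\in\mathrm{SM}[\Pi]}W_\Pi(J)$; $I$ is a (probabilistic) stable model of $\Pi$ if $P_\Pi(I)\neq0$. Multi-valued signature: constants $c$ with finite domains $\mathrm{Dom}(c)$; atoms $c=v$; constants are probabilistic or regular. A multi-valued probabilistic program $\mathbf{\Pi}=\langle\mathit{PF},\Pi\rangle$: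 $\mathit{PF}$ has, for each probabilistic constant $c$, one declaration $p_1:c=v_1\mid\dots\mid p_n:c=v_n$ ($\{v_i\}=\mathrm{Dom}(c)$ distinct, $p_i\in[0,1]$, $\sum p_i=1$), and $M_{\mathbf{\Pi}}(c=v_i)=p_i$; $\Pi$ is a set of rules whose heads contain no atom of a probabilistic constant. $T(\mathbf{\Pi})$ is the $\mathrm{LP}^{\mathrm{MLN}}$ program containing: $\ln(p_i):c=v_i$ if $0<p_i<1$, $\alpha:c=v_i$ if $p_i=1$, $\alpha:\bot\leftarrow c=v_i$ if $p_i=0$; $\alpha:R$ for $R\in\Pi$; $\alpha:\bot\leftarrow c=v_1\wedge c=v_2$ for every constant $c$ and distinct $v_1,v_2\in\mathrm{Dom}(c)$; $\alpha:\bot\leftarrow\neg\bigvee_{v\in\mathrm{Dom}(c)}c=v$ for every probabilistic $c$. $I$ is consistent if it satisfies the last two kinds of constraints; $\mathit{TC}(I)=\{c=v\in I\mid c$ probabilistic$\}$; $\mathrm{SM}''[\mathbf{\Pi}]$ is the set of consistent $I$ that are stable models of $\Pi\cup\mathit{TC}(I)$. *)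

(* Defs.v *)
From HB Require Import structures.
From mathcomp Require Import all_boot all_order all_algebra.
From mathcomp Require Import all_classical all_reals all_analysis.
Set Implicit Arguments. Unset Strict Implicit. Unset Printing Implicit Defensive.
Import Order.TTheory GRing.Theory Num.Theory.
Import numFieldNormedType.Exports.
Local Open Scope classical_set_scope.
Local Open Scope ring_scope.

Inductive formula (A : Type) :=
| Fatom of A
| Ftrue
| Ffalse
| Fneg of formula A
| Fand of formula A & formula A
| For of formula A & formula A
| Fimp of formula A & formula A.
Arguments Ftrue {A}. Arguments Ffalse {A}.

Section FormulaEq.
Variable A : eqType.
Fixpoint eqf (f g : formula A) : bool :=
  match f, g with
  | Fatom a, Fatom b => a == b
  | Ftrue, Ftrue => true
  | Ffalse, Ffalse => true
  | Fneg f, Fneg g => eqf f g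
  | Fand f1 f2, Fand g1 g2 => eqf f1 g1 && eqf f2 g2
  | For f1 f2, For g1 g2 => eqf f1 g1 && eqf f2 g2
  | Fimp f1 f2, Fimp g1 g2 => eqf f1 g1 && eqf f2 g2
  | _, _ => false
  end.
Lemma eqfP : Equality.axiom eqf.
Proof.
elim=> [a|||f IH|f1 IH1 f2 IH2|f1 IH1 f2 IH2|f1 IH1 f2 IH2]
       [b|||g|g1 g2|g1 g2|g1 g2] /=; try by constructor.
- by apply: (iffP eqP) => [->|[]].
- by apply: (iffP (IH g)) => [->|[]].
- apply: (iffP andP) => [[/IH1 -> /IH2 ->]//|[<- <-]].
  by split; [apply/IH1|apply/IH2].
- apply: (iffP andP) => [[/IH1 -> /IH2 ->]//|[<- <-]].
  by split; [apply/IH1|apply/IH2].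
- apply: (iffP andP) => [[/IH1 -> /IH2 ->]//|[<- <-]].
  by split; [apply/IH1|apply/IH2].
Qed.
HB.instance Definition _ := hasDecEq.Build (formula A) eqfP.
End FormulaEq.

Fixpoint fsat (A : finType) (I : {set A}) (f : formula A) : bool :=
  match f with
  | Fatom a => a \in I
  | Ftrue => true
  | Ffalse => false
  | Fneg g => ~~ fsat I g
  | Fand g h => fsat I g && fsat I h
  | For g h => fsat I g || fsat I h
  | Fimp g h => fsat I g ==> fsat I h
  end.

Fixpoint neg_only (A : Type) (f : formula A) : bool :=
  match f with
  | Fatom _ => false
  | Ftrue | Ffalse | Fneg _ => true
  | Fand g h | For g h | Fimp g h => neg_only g && neg_only h
  end.

(* Rules  A <- B /\ N                                                  *)
(*  (head disjunction, positive body conjunction, negative part N)     *)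
Definition rule (A : Type) := (seq A * seq A * formula A)%type.
Definition rhead (A : Type) (r : rule A) : seq A := r.1.1.
Definition rpbody (A : Type) (r : rule A) : seq A := r.1.2.
Definition rneg (A : Type) (r : rule A) : formula A := r.2.

Definition wf_rule (A : Type) (r : rule A) : bool := neg_only (rneg r).

Section Semantics.
Variable A : finType.
Implicit Types (I J : {set A}) (r : rule A) (P : seq (rule A)).

Definition rsat I r : bool :=
  [&& all (fun a => a \in I) (rpbody r) & fsat I (rneg r)] ==>
  has (fun a => a \in I) (rhead r).

Definition prsat I (r : seq A * seq A) : bool :=
  all (fun a => a \in I) r.2 ==> has (fun a => a \in I) r.1.

Definition reduct P I : seq (seq A * seq A) :=
  [seq (rhead r, rpbody r) | r <- P & fsat I (rneg r)].

Definition pmodel J (Q : seq (seq A * seq A)) : bool := all (prsat J) Q.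

Definition stable_model P I : Prop :=
  pmodel I (reduct P I) /\ forall J, J \proper I -> ~~ pmodel J (reduct P I).

(* weights: [Some w] is the real weight w, [None] is the symbol alpha  *)
(* a program is a finite set of weighted rules (a duplicate-free list) *)
Variable R : realType.
Definition wrule := (option R * rule A)%type.

Definition satisfied_part (Pi : seq wrule) I : seq wrule :=
  [seq wr <- Pi | rsat I wr.2].

Definition inSM (Pi : seq wrule) I : Prop :=
  stable_model [seq wr.2 | wr <- satisfied_part Pi I] I.

Definition wval (alpha : R) (w : option R) : R :=
  if w is Some x then x else alpha.

Definition W (Pi : seq wrule) (alpha : R) I : R :=
  if `[< inSM Pi I >] then
    expR (\sum_(wr <- satisfied_part Pi I) wval alpha wr.1)
  else 0.

Definition Pratio (Pi : seq wrule) I (alpha : R) : R :=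
  W Pi alpha I / \sum_(J : {set A} | `[< inSM Pi J >]) W Pi alpha J.

Definition prob_stable_model (Pi : seq wrule) I : Prop :=
  exists l : R, Pratio Pi I x @[x --> +oo%R] --> l /\ l != 0.

End Semantics.

(* Constants: finType C.  Atoms "c = v": finType A with [const : A ->  *)
(* C]; the atom a stands for  const a = v_a, and Dom(c) is identified   *)
(* with the atoms a such that const a = c.                             *)
(* [prob c]: c is a probabilistic constant.                            *)
(* [p a] = M(c=v) for the atom a = (c = v), c probabilistic.            *)
Section MultiValued.
Variables (R : realType) (C A : finType) (const : A -> C) (prob : pred C).
Variable (p : A -> R).

Definition dom (c : C) : seq A := [seq a <- enum A | const a == c].

Definition valid_PF : Prop :=
  (forall a, prob (const a) -> 0 <= p a <= 1) /\
  (forall c, prob c -> \sum_(a <- dom c) p a = 1).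

Definition valid_rules (Pi : seq (rule A)) : Prop :=
  forall r, r \in Pi -> wf_rule r /\ all (fun a => ~~ prob (const a)) (rhead r).

Definition fact (a : A) : rule A := ([:: a], [::], Ftrue).

Definition pf_rules : seq (wrule A R) :=
  [seq (if (0 < p a) && (p a < 1) then (Some (ln (p a)), fact a)
        else if p a == 1 then (None, fact a)
        else (None, ([::], [:: a], Ftrue)))
  | a <- enum A & prob (const a)].
(* (for valid PF, the last branch is exactly the case p a = 0) *)

(* alpha : _|_ <- c = v1 /\ c = v2  for distinct v1, v2 in Dom(c) *)
Definition uniq_constraints : seq (rule A) :=
  [seq ([::], [:: a1; a2], Ftrue)
  | a1 <- enum A, a2 <- [seq a2 <- enum A | (const a1 == const a2) &&
                                 (enum_rank a1 < enum_rank a2)%N]].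

(* alpha : _|_ <- not (OR_{v in Dom(c)} c = v)  for probabilistic c *)
Definition exist_constraints : seq (rule A) :=
  [seq ([::], [::], Fneg (foldr (fun a f => For (Fatom a) f) Ffalse (dom c)))
  | c <- enum C & prob c].

Definition T (Pi : seq (rule A)) : seq (wrule A R) :=
  undup (pf_rules ++ [seq (None, r) | r <- Pi]
                  ++ [seq (None, r) | r <- uniq_constraints]
                  ++ [seq (None, r) | r <- exist_constraints]).

Definition consistent (I : {set A}) : bool :=
  all (rsat I) uniq_constraints && all (rsat I) exist_constraints.

Definition TC (I : {set A}) : seq (rule A) :=
  [seq fact a | a <- enum I & prob (const a)].

Definition inSM2 (Pi : seq (rule A)) (I : {set A}) : Prop :=
  consistent I /\ stable_model (Pi ++ TC I) I.

End MultiValued.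

(* Main.v *)
Require Import Defs.
From HB Require Import structures.
From mathcomp Require Import all_boot all_order all_algebra.
From mathcomp Require Import all_classical all_reals all_analysis.
From mathcomp Require Import ring lra.
Import Order.TTheory GRing.Theory Num.Theory.
Import numFieldNormedType.Exports.
Local Open Scope ring_scope.

Section An.
Local Open Scope classical_set_scope.
Variable R : realType.

Lemma cvg_powS (g : R -> R) (n : nat) :
  g x @[x --> +oo] --> 0 -> g x ^+ n.+1 @[x --> +oo] --> 0.
Proof.
move=> hg; elim: n => [|n IH]; first by under eq_fun do rewrite expr1.
under eq_fun do rewrite exprS.
by rewrite -(mulr0 (0:R)); apply: cvgM.
Qed.

Lemma cvg_expNd (c : R) (d : nat) :
  (0 < d)%N -> expR (c - d%:R * x) @[x --> +oo] --> 0.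
Proof.
case: d => // d _.
under eq_fun do rewrite expRD -mulrN expRM_natl.
rewrite -(mulr0 (expR c)); apply: cvgM; first exact: cvg_cst.
by apply: cvg_powS; exact: cvgr_expR.
Qed.

Lemma cvg_sum_list (I : Type) (r : seq I) (P : pred I) (f : I -> R -> R) (l : I -> R) :
  (forall i, P i -> f i x @[x --> +oo] --> l i) ->
  \sum_(i <- r | P i) f i x @[x --> +oo] --> \sum_(i <- r | P i) l i.
Proof.
move=> H; elim: r => [|i r IH].
  under eq_fun do rewrite big_nil. rewrite big_nil; exact: cvg_cst.
under eq_fun do rewrite big_cons. rewrite big_cons.
case: (boolP (P i)) => Pi //.
by apply: cvgD => //; exact: H.
Qed.

Lemma ratio_cvg (U : finType) (S : pred U) (s : U -> R) (k : U -> nat) (N : nat) (J0 : U) :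
  (forall J, S J -> (k J <= N)%N) -> S J0 -> k J0 = N -> forall I,
  (if S I then expR (s I + (k I)%:R * x) else 0) /
    \sum_(J | S J) (if S J then expR (s J + (k J)%:R * x) else 0) @[x --> +oo] -->
  (if S I && (k I == N) then expR (s I) else 0) /
    \sum_(J | S J) (if k J == N then expR (s J) else 0).
Proof.
move=> kN SJ0 kJ0 I.
pose e J (x : R) := expR (s J + ((k J)%:R - N%:R) * x).
have eE J x : expR (s J + (k J)%:R * x) = e J x * expR (N%:R * x).
  by rewrite /e -expRD mulrBl -addrA subrK.
have ecvg J : S J -> e J x @[x --> +oo] --> (if k J == N then expR (s J) else 0).
  move=> SJ; rewrite /e; case: eqP => [->|/eqP ne].
    under eq_fun do rewrite subrr mul0r addr0. exact: cvg_cst.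
  have lt : (k J < N)%N by rewrite ltn_neqAle ne (kN J SJ).
  have hx (x : R) : s J + ((k J)%:R - N%:R) * x = s J - (N - k J)%:R * x.
    rewrite natrB ?(ltnW lt) //; ring.
  under eq_fun do rewrite hx.
  by apply: cvg_expNd; rewrite subn_gt0.
have Lpos : 0 < \sum_(J | S J) (if k J == N then expR (s J) else 0).
  rewrite (bigD1 J0) //= kJ0 eqxx ltr_pwDl ?expR_gt0 //.
  by apply: sumr_ge0 => J _; case: ifP => // _; exact: ltW (expR_gt0 _).
have -> : (fun x => (if S I then expR (s I + (k I)%:R * x) else 0) /
    \sum_(J | S J) (if S J then expR (s J + (k J)%:R * x) else 0)) =
  (fun x => (if S I then e I x else 0) / \sum_(J | S J) e J x).
  apply: funext => x.
  have -> : \sum_(J | S J) (if S J then expR (s J + (k J)%:R * x) else 0) =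
     (\sum_(J | S J) e J x) * expR (N%:R * x).
    rewrite big_distrl /=; apply: eq_bigr => J ->; exact: eE.
  have -> : (if S I then expR (s I + (k I)%:R * x) else 0) =
     (if S I then e I x else 0) * expR (N%:R * x).
    by case: (S I); rewrite ?mul0r ?eE.
  by rewrite -mulf_div divff ?mulr1 // gt_eqF // expR_gt0.
apply: cvgM; last first.
  apply: cvgV; first by rewrite gt_eqF.
  by apply: cvg_sum_list => J SJ; exact: ecvg.
case: (boolP (S I)) => SI /=; first exact: ecvg.
exact: cvg_cst.
Qed.
Lemma Lpos_lem (U : finType) (S : pred U) (s : U -> R) (k : U -> nat) (N : nat) (J0 : U) :
  S J0 -> k J0 = N -> 0 < \sum_(J | S J) (if k J == N then expR (s J) else 0).
Proof.
move=> SJ0 kJ0; rewrite (bigD1 J0) //= kJ0 eqxx ltr_pwDl ?expR_gt0 //.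
by apply: sumr_ge0 => J _; case: ifP => // _; exact: ltW (expR_gt0 _).
Qed.
End An.

Section Comb.
Variable A : finType.
Implicit Types (I J : {set A}) (r : rule A) (P Q : seq (rule A)).

Definition okr I J r := fsat I (rneg r) ==> prsat J (rhead r, rpbody r).

Lemma pm_reduct P I J : pmodel J (reduct P I) = all (okr I J) P.
Proof. by rewrite /pmodel /reduct all_map all_filter. Qed.

Lemma sm_eq P1 P2 I : P1 =i P2 -> stable_model P1 I <-> stable_model P2 I.
Proof.
move=> H; rewrite /stable_model.
have E J : pmodel J (reduct P1 I) = pmodel J (reduct P2 I).
  by rewrite !pm_reduct; apply: eq_all_r.
split=> [[h1 h2]|[h1 h2]]; split.
- by rewrite -E.
- by move=> J /h2; rewrite E.
- by rewrite E.
- by move=> J /h2; rewrite E.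
Qed.

Lemma ok_constraint I J r : rhead r = [::] -> rsat I r -> J \subset I -> okr I J r.
Proof.
move=> hr; rewrite /rsat /okr /prsat /= hr /= => h sJI.
apply/implyP=> f; apply/implyP=> aJ; move: h; rewrite f andbT.
suff -> : all (fun a => a \in I) (rpbody r) by [].
apply: sub_all aJ => x /= xJ; exact: (fintype.subsetP sJI).
Qed.

Lemma ok_rsat I r : okr I I r = rsat I r.
Proof.
by rewrite /okr /rsat /prsat /=; case: (all _ _); case: (fsat _ _).
Qed.

Lemma stable_cat I P Q : all (rsat I) Q -> all (fun r => rhead r == [::]) Q ->
  (stable_model (P ++ Q) I <-> stable_model P I).
Proof.
move=> hQ eQ.
have E J : J \subset I -> pmodel J (reduct (P ++ Q) I) = pmodel J (reduct P I).
  move=> sJI; rewrite !pm_reduct all_cat.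
  suff -> : all (okr I J) Q by rewrite andbT.
  apply/allP=> r rQ; apply: ok_constraint => //.
    by apply/eqP; exact: (allP eQ).
  exact: (allP hQ).
rewrite /stable_model E ?subxx //.
split=> [[h1 h2]|[h1 h2]]; split=> // J pJ;
  [rewrite -E; [exact: h2|] | rewrite E; [exact: h2|]]; exact: proper_sub.
Qed.

Lemma fsat_foldr I (s : seq A) :
  fsat I (foldr (fun a f => For (Fatom a) f) Ffalse s) = has (fun a => a \in I) s.
Proof. by elim: s => //= a s ->. Qed.

Lemma count_and_eq (X : Type) (Q P0 : pred X) (l : seq X) :
  (count (fun x => Q x && P0 x) l == count Q l) = all (fun x => Q x ==> P0 x) l.
Proof.
elim: l => //= x l IH; case: (Q x); case: (P0 x) => /=; rewrite ?add1n ?add0n ?eqSS ?IH //.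
rewrite ltn_eqF // ltnS; by apply: sub_count => y /andP [].
Qed.
End Comb.


Section Main.
Variables (R : realType) (C A : finType) (const : A -> C) (prob : pred C) (p : A -> R)
  (Pi : seq (rule A)).
Hypothesis hPF : valid_PF const prob p.
Hypothesis hpos : forall a : A, prob (const a) -> 0 < p a.

Let Tl := T const prob p Pi.
Let U := uniq_constraints const.
Let E := exist_constraints const prob.

Definition pfe (a : A) : wrule A R :=
  if (0 < p a) && (p a < 1) then (Some (ln (p a)), fact a)
  else if p a == 1 then (None, fact a)
  else (None, ([::], [:: a], Ftrue)).

Lemma pfe_snd a : prob (const a) -> (pfe a).2 = fact a.
Proof.
move=> pa; rewrite /pfe; case: ifP => // h1; case: ifP => // /negbT h2.
have h0 := hpos a pa; have /andP [_ h3] := hPF.1 a pa.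
move: h1; rewrite h0 /=; move/negbT; rewrite -leNgt => h4.
by move: h2; rewrite (@le_anti _ _ (p a) 1) ?h3 ?h4 ?eqxx.
Qed.

Lemma mem_Tl wr : (wr \in Tl) =
  [|| wr \in [seq pfe a | a <- enum A & prob (const a)],
      wr \in [seq (None, r) | r <- Pi],
      wr \in [seq (None, r) | r <- U] |
      wr \in [seq (None, r) | r <- E]].
Proof. by rewrite /Tl /T mem_undup !mem_cat. Qed.

Definition Hard I := all (fun wr : wrule A R => (wr.1 == None) ==> rsat I wr.2) Tl.

Lemma emptyU : all (fun r => rhead r == [::]) (U ++ E).
Proof.
rewrite all_cat; apply/andP; split; apply/allP => r.
  by case/allpairsPdep => a1 [a2 [_ _ ->]].
by case/mapP => c _ ->.
Qed.

Lemma mem_PI I : Hard I ->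
  [seq wr.2 | wr <- satisfied_part Tl I] =i (Pi ++ TC const prob I) ++ (U ++ E).
Proof.
move=> hH r; rewrite !mem_cat; apply/idP/idP.
  case/mapP => wr; rewrite mem_filter => /andP [sat]; rewrite mem_Tl => hw ->.
  case/or4P: hw.
  - case/mapP => a; rewrite mem_filter => /andP [pa _] wE; subst wr.
    move: sat; rewrite pfe_snd // /rsat /= orbF => aI.
    apply/orP; left; apply/orP; right; apply/mapP; exists a => //.
    by rewrite mem_filter pa mem_enum.
  - by case/mapP => r' r'P wE; subst wr; rewrite r'P.
  - by case/mapP => r' r'P wE; subst wr => /=; rewrite r'P !orbT.
  - by case/mapP => r' r'P wE; subst wr => /=; rewrite r'P !orbT.
have hard (r' : wrule A R) : r' \in [seq (None, r) | r <- Pi] \/ r' \in [seq (None, r) | r <- U]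
     \/ r' \in [seq (None, r) | r <- E] ->
   r'.2 \in [seq wr.2 | wr <- satisfied_part Tl I].
  move=> h; have rT : r' \in Tl by rewrite mem_Tl; case: h => [->|[->|->]]; rewrite ?orbT.
  have n1 : r'.1 == None by case: h => [|[|]] /mapP [x _ ->].
  apply: map_f; rewrite mem_filter rT andbT.
  by have := allP hH r' rT; rewrite n1.
case/orP => [/orP [rP|rTC]|/orP [rU|rE]].
- by apply: (hard (None, r)); left; exact: map_f.
- move: rTC; case/mapP => a; rewrite mem_filter mem_enum => /andP [pa aI] ->.
  rewrite -(pfe_snd a pa); apply: map_f; rewrite mem_filter pfe_snd // /rsat /= aI /=.
  by rewrite mem_Tl; apply/orP; left; apply: map_f; rewrite mem_filter pa mem_enum.
- by apply: (hard (None, r)); right; left; exact: map_f.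
- by apply: (hard (None, r)); right; right; exact: map_f.
Qed.

Lemma hardfact I a : prob (const a) -> p a = 1 -> consistent const prob I -> a \in I.
Proof.
move=> pa pa1 /andP [_ hE].
have rc : ([::], [::], Fneg (foldr (fun a f => For (Fatom a) f) Ffalse (dom const (const a)))) \in E.
  by apply/mapP; exists (const a) => //; rewrite mem_filter pa mem_enum.
have := allP hE _ rc; rewrite /rsat /= fsat_foldr implybF negbK => /hasP [b bd bI].
case: (eqVneq b a) => [<-//|nba].
have ad : a \in dom const (const a) by rewrite mem_filter eqxx mem_enum.
have ud : uniq (dom const (const a)) by rewrite filter_uniq // enum_uniq.
have s1 := hPF.2 _ pa.
have bd2 : b \in [seq i <- dom const (const a) | i != a] by rewrite mem_filter nba.
have ud2 : uniq [seq i <- dom const (const a) | i != a] by rewrite filter_uniq.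
rewrite (bigD1_seq a ad ud) /= -big_filter (bigD1_seq b bd2 ud2) /= in s1.
have r0 : 0 <= \sum_(i <- [seq i <- dom const (const a) | i != a] | i != b) p i.
  rewrite big_seq_cond; apply: sumr_ge0 => i /andP [].
  rewrite !mem_filter => /and3P [_ /eqP ci _] _.
  by have /andP [] := hPF.1 i (etrans (congr1 prob ci) pa).
have pb : 0 < p b.
  apply: hpos; move: bd; rewrite mem_filter => /andP [/eqP -> _]; exact: pa.
move: s1; rewrite pa1 => s1; lra.
Qed.

Lemma key I : (inSM Tl I /\ Hard I) <-> inSM2 const prob Pi I.
Proof.
split.
- move=> [hsm hH].
  have cons : consistent const prob I.
    rewrite /consistent; apply/andP; split; apply/allP => r rin;
      have := allP hH (None, r); rewrite /=; apply; rewrite mem_Tl; apply/or4P;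
      [apply: Or43 | apply: Or44]; exact: map_f.
  split => //.
  have h1 := (@sm_eq _ _ _ _ (mem_PI I hH)).1 hsm.
  apply: (@stable_cat _ _ _ _ _ emptyU).1 h1.
  by move: cons => /andP [c1 c2]; rewrite all_cat c1 c2.
- move=> [cons hsm].
  have hH : Hard I.
    apply/allP => wr; rewrite mem_Tl => /or4P [].
    + case/mapP => a; rewrite mem_filter mem_enum => /andP [pa _] ->.
      have := pfe_snd a pa; rewrite /pfe.
      case: ifP => [//|h1]; case: ifP => [/eqP pa1 _|h2 /= hc].
        rewrite /rsat /= orbF; exact: hardfact.
      by case: hc.
    + case/mapP => r rP -> /=.
      have := hsm.1; rewrite pm_reduct all_cat => /andP [h _]; rewrite -ok_rsat; exact: (allP h).
    + case/mapP => r rU -> /=; move: cons => /andP [c1 _]; exact: (allP c1).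
    + case/mapP => r rU -> /=; move: cons => /andP [_ c2]; exact: (allP c2).
  split => //.
  apply/(@sm_eq _ _ _ _ (mem_PI I hH)).
  apply/(@stable_cat _ _ _ _ _ emptyU) => //.
  by move: cons => /andP [c1 c2]; rewrite all_cat c1 c2.
Qed.

Definition kk I := count (fun wr : wrule A R => (wr.1 == None) && rsat I wr.2) Tl.
Definition NN := count (fun wr : wrule A R => wr.1 == None) Tl.
Definition sc I := \sum_(wr <- Tl | rsat I wr.2) odflt 0 wr.1.

Lemma kk_le I : (kk I <= NN)%N.
Proof. by apply: sub_count => wr /andP []. Qed.

Lemma kk_hard I : (kk I == NN) = Hard I.
Proof. exact: count_and_eq. Qed.

Lemma sumW_gen I alpha (l : seq (wrule A R)) :
  \sum_(wr <- l | rsat I wr.2) wval alpha wr.1 =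
  \sum_(wr <- l | rsat I wr.2) odflt 0 wr.1 +
  (count (fun wr : wrule A R => (wr.1 == None) && rsat I wr.2) l)%:R * alpha.
Proof.
elim: l => [|[w r] l IH]; first by rewrite !big_nil mul0r addr0.
rewrite !big_cons /=; case: (rsat I r); rewrite IH /=; case: w => [x|] /=;
  rewrite ?andbF ?add0n ?natrD //; ring.
Qed.

Lemma sumW I alpha :
  \sum_(wr <- satisfied_part Tl I) wval alpha wr.1 = sc I + (kk I)%:R * alpha.
Proof. by rewrite /satisfied_part big_filter sumW_gen. Qed.

Lemma main_sec (hex : exists I0, inSM2 const prob Pi I0) I :
  prob_stable_model Tl I <-> inSM2 const prob Pi I.
Proof.
case: hex => I0 /key [sm0 h0].
have cv := @ratio_cvg R _ (fun J => `[< inSM Tl J >]) sc kk NN I0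
  (fun J _ => kk_le J) (asboolT sm0) (eqP (etrans (kk_hard I0) h0)) I.
have Lp := @Lpos_lem R _ (fun J => `[< inSM Tl J >]) sc kk NN I0
  (asboolT sm0) (eqP (etrans (kk_hard I0) h0)).
have PE : Pratio Tl I = fun x =>
   (if `[< inSM Tl I >] then expR (sc I + (kk I)%:R * x) else 0) /
   \sum_(J | `[< inSM Tl J >]) (if `[< inSM Tl J >] then expR (sc J + (kk J)%:R * x) else 0).
  apply: funext => x; rewrite /Pratio /W sumW; congr (_ / _).
  by apply: eq_bigr => J _; rewrite sumW.
split.
- case=> l [hl l0].
  rewrite PE in hl.
  have e1 := cvg_unique (@Rhausdorff R) hl cv.
  move: l0; rewrite e1; case: ifP => [/andP [sI kI] _|_]; last by rewrite mul0r eqxx.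
  by apply/key; split; [exact/asboolP | rewrite -kk_hard].
- move=> h; have [smI hI] := (key I).2 h.
  exists ((if `[< inSM Tl I >] && (kk I == NN) then expR (sc I) else 0) /
    \sum_(J | `[< inSM Tl J >]) (if kk J == NN then expR (sc J) else 0)).
  split; first by rewrite PE.
  rewrite (asboolT smI) kk_hard hI /= mulf_neq0 ?invr_eq0 ?gt_eqF ?expR_gt0 //.
Qed.

End Main.

Theorem lemma8 (R : realType) (C A : finType) (const : A -> C)
  (prob : pred C) (p : A -> R) (Pi : seq (rule A)) :
  valid_PF const prob p ->
  valid_rules const prob Pi ->
  (exists I : {set A}, inSM2 const prob Pi I) ->
  (forall a : A, prob (const a) -> 0 < p a) ->
  forall I : {set A},
    prob_stable_model (T const prob p Pi) I <-> inSM2 const prob Pi I.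
Proof.
move=> hPF _ hex hpos I; exact: main_sec.
Qed.
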